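(* Consider the networked feedback system described in the context, under the input assumption stated there, and let $d(k)=\sum_{i=0}^{\tau}\omega(k,k-i)u(k-i)$. Then for all integers $k_1,k_2\ge0$, $\mathbb E\{v(k_1)d(k_2)\}=0$.
   Context: Setting: $P$ is a SISO discrete-time LTI plant which is strictly proper (relative degree $\ge1$), $K$ a proper SISO LTI controller. Let $\tau\ge0$ be an integer, $\mathcal D=\{0,\dots,\tau\}$, and $\{\tau_n\}$ an i.i.d. sequence with values in $\mathcal D$, $\Pr\{\tau_n=i\}=p_i$, $\sum_ip_i=1$. With real weights $\alpha_0,\dots,\alpha_\tau$ and Kronecker delta $\delta$, the channel maps $u$ to $u_d(k)=\sum_{i=0}^{\tau}\alpha_i\delta(\tau_{k-i}-i)u(k-i)$. Closed loop: plant input $v-u_d$, plant output $y$, $u=Ky$; signals real, system at rest at $k=0$ (signals vanish for $k<0$). Define $\omega(k,n)=\alpha_{k-n}[\delta(\tau_n-(k-n))-p_{k-n}]$ if $n\le k\le n+\tau$ and $\omega(k,n)=0$ otherwise. Input assumption: $\{\tau_n\}$ is independent of $\{v(k)\}$, and $\{v(k)\}$ is zero-mean white noise (independent values) with bounded variances. *)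

(* Defs.v *)
From HB Require Import structures.
From mathcomp Require Import all_boot all_order all_algebra.
From mathcomp Require Import all_classical all_reals all_analysis.
Set Implicit Arguments. Unset Strict Implicit. Unset Printing Implicit Defensive.
Import Order.TTheory GRing.Theory Num.Theory.
Local Open Scope ring_scope.
Local Open Scope classical_set_scope.

Section defs.
Context {d : measure_display} {T : measurableType d} {R : realType}.

Definition rv_events {d'} {T' : measurableType d'} (X : T -> T') : set (set T) :=
  fun A => exists2 B : set T', measurable B & A = X @^-1` B.

Definition indep_family (P : probability T R) (I : eqType)
    (E : I -> set (set T)) : Prop :=
  forall (s : seq I) (A : I -> set T), uniq s ->
    (forall j, j \in s -> E j (A j)) ->
    P (\big[setI/setT]_(j <- s) A j) = (\prod_(j <- s) P (A j))%E.

(* independence of two families of event classes (of the sigma-algebras they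
   jointly generate), stated on the generating pi-system of finite
   intersections *)
Definition indep_families (P : probability T R) (I J : eqType)
    (E : I -> set (set T)) (F : J -> set (set T)) : Prop :=
  forall (s : seq I) (s' : seq J) (A : I -> set T) (B : J -> set T),
    (forall i, i \in s -> E i (A i)) ->
    (forall j, j \in s' -> F j (B j)) ->
    P (\big[setI/setT]_(i <- s) A i `&` \big[setI/setT]_(j <- s') B j) =
    (P (\big[setI/setT]_(i <- s) A i) * P (\big[setI/setT]_(j <- s') B j))%E.

Definition omega (tau : nat) (alpha p : nat -> R) (tauseq : nat -> T -> nat)
    (k n : nat) (t : T) : R :=
  if (leq n k && leq k (addn n tau))
  then alpha (subn k n) * ((tauseq n t == subn k n)%:R - p (subn k n))
  else 0.

(* channel output u_d(k) = sum_{i=0}^tau alpha_i delta(tau_{k-i} - i) u(k-i),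
   terms with k - i < 0 vanish (system at rest) *)
Definition channel_out (tau : nat) (alpha : nat -> R) (tauseq : nat -> T -> nat)
    (u : nat -> T -> R) (k : nat) (t : T) : R :=
  \sum_(i < tau.+1 | leq i k)
     alpha i * (tauseq (subn k i) t == i)%:R * u (subn k i) t.

Definition dsig (tau : nat) (alpha p : nat -> R) (tauseq : nat -> T -> nat)
    (u : nat -> T -> R) (k : nat) (t : T) : R :=
  \sum_(i < tau.+1 | leq i k)
     omega tau alpha p tauseq k (subn k i) t * u (subn k i) t.

End defs.

(* Main.v *)
Require Import Defs.
From HB Require Import structures.
From mathcomp Require Import all_boot all_order all_algebra.
From mathcomp Require Import all_classical all_reals all_analysis.
From mathcomp Require Import measurable_realfun lebesgue_integral ring lra zify.
Import Order.TTheory GRing.Theory Num.Theory.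
Local Open Scope ring_scope.
Local Open Scope classical_set_scope.

Section core.
Local Open Scope ereal_scope.
Context {d} {T : measurableType d} {R : realType} (P : probability T R).

Lemma integral_restr (C : set T) (mC : measurable C) (f : T -> \bar R) :
  measurable_fun [set: T] f -> (forall x, 0 <= f x) ->
  \int[mrestr P mC]_x f x = \int[P]_(x in C) f x.
Proof.
move=> mf f0.
rewrite (@ge0_negligible_integral _ _ _ (mrestr P mC) setT (~` C)) //; last 2 first.
- exact: measurableC.
- by transitivity (P (~` C `&` C)); [|rewrite setICl measure0].
rewrite setTD setCK.
apply: eq_measure_integral => A mA AC.
by transitivity (P (A `&` C)); [|rewrite setIidl].
Qed.
Lemma K0 (X : T -> (R * R)%type) (mX : measurable_fun setT X) (C : set T) (mC : measurable C)
  (ind : forall A B, measurable A -> measurable B ->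
     P (X @^-1` (A `*` B) `&` C) = P C * P (X @^-1` (A `*` B)))
  (g : (R * R)%type -> \bar R) (mg : measurable_fun setT g) (g0 : forall z, 0 <= g z) :
  \int[P]_(x in C) g (X x) = P C * \int[P]_x g (X x).
Proof.
have mgX : measurable_fun setT (g \o X) by exact: measurableT_comp.
rewrite -integral_restr //.
rewrite -[LHS](@ge0_integral_pushforward _ _ _ _ _ _ mX (mrestr P mC) setT g) //; try by move=> ? _.
rewrite -[X in _ = _ * X](@ge0_integral_pushforward _ _ _ _ _ _ mX P setT g) //; try by move=> ? _.
have PC0 : (0 <= fine (P C))%R by apply: fine_ge0.
pose r : {nonneg R} := NngNum PC0.
have -> : P C = r%:num%:E by rewrite /= fineK // fin_num_measure.
rewrite -ge0_integral_mscale //.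
apply: eq_measure_integral => A mA _.
apply: (measure_unique [set A `*` B | A in measurable & B in measurable] (fun=> setT)) => //.
- exact: measurable_prod_measurableType.
- move=> _ _ [X1 mX1 [X2 mX2 <-]] [Y1 mY1 [Y2 mY2 <-]].
  exists (X1 `&` Y1); first exact: measurableI.
  by exists (X2 `&` Y2); [exact: measurableI|rewrite setXI].
- by move=> _; exists setT => //; exists setT => //; rewrite setXTT.
- by rewrite bigcup_const.
- move=> _ [B1 mB1 [B2 mB2 <-]].
  transitivity (P (X @^-1` (B1 `*` B2) `&` C)); first by [].
  rewrite ind //.
  transitivity (r%:num%:E * P (X @^-1` (B1 `*` B2))); last by [].
  by rewrite /= fineK // fin_num_measure.
- move=> _.
  apply: (@le_lt_trans _ _ (P (X @^-1` setT `&` C))); first exact: lexx.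
  apply: (le_lt_trans (probability_le1 _ _)); last exact: ltry.
  apply: measurableI => //; rewrite -[X in measurable X]setTI; exact: mX.
Qed.

Lemma K1 (a b : T -> R) (ma : measurable_fun setT a) (mb : measurable_fun setT b)
  (chi : T -> bool) (mC : measurable [set t | chi t])
  (ind : forall A B, measurable A -> measurable B ->
     P ([set t | A (a t) /\ B (b t)] `&` [set t | chi t]) =
     P [set t | chi t] * P [set t | A (a t) /\ B (b t)])
  (iab : P.-integrable setT (fun t => (a t * b t)%:E)) :
  P.-integrable setT (fun t => ((chi t)%:R * a t * b t)%:E) /\
  'E_P[fun t => ((chi t)%:R * a t * b t)%R] = P [set t | chi t] * 'E_P[fun t => (a t * b t)%R].
Proof.
set C := [set t | chi t].
have chiE : forall t, ((chi t)%:R : R) = \1_C t.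
  move=> t; rewrite indicE; case: (boolP (chi t)) => h.
    by rewrite mem_set.
  by rewrite memNset //; apply/negP.
have mchi : measurable_fun setT (fun t => ((chi t)%:R : R)).
  rewrite (_ : (fun t => _) = \1_C); last by apply/funext => t; rewrite chiE.
  exact: measurable_indic.
have mX : measurable_fun setT (fun t => (a t, b t)) by exact: measurable_fun_pair.
split.
  apply: (le_integrable measurableT _ _ iab).
    apply/measurable_EFinP; apply: measurable_funM => //; exact: measurable_funM.
  move=> t _; rewrite !abse_EFin lee_fin -mulrA normrM.
  rewrite -[X in (_ <= X)%R]mul1r ler_wpM2r //.
  by case: (chi t); rewrite ?normr1 ?normr0.
rewrite !unlock.
have -> : \int[P]_x (((chi x)%:R * a x * b x)%:E) = \int[P]_(x in C) (a x * b x)%:E.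
  rewrite [RHS]integral_mkcond; apply: eq_integral => t _.
  rewrite /patch; case: (boolP (chi t)) => h.
    by rewrite mem_set // mul1r.
  by rewrite memNset ?mul0r //; apply/negP.
pose G := fun z : (R * R)%type => ((z.1 * z.2)%R)%:E.
have mG : measurable_fun setT G.
  apply/measurable_EFinP; apply: measurable_funM => //.
have K := @K0 _ mX.
rewrite integralE [in RHS]integralE.
have eqp D : \int[P]_(x in D) (fun x0 => (a x0 * b x0)%:E)^\+ x = \int[P]_(x in D) G^\+ (a x, b x).
  by apply: eq_integral => x _; rewrite !funeposE.
have eqn D : \int[P]_(x in D) (fun x0 => (a x0 * b x0)%:E)^\- x = \int[P]_(x in D) G^\- (a x, b x).
  by apply: eq_integral => x _; rewrite !funenegE.
rewrite !eqp !eqn.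
rewrite (K _ mC _ (G^\+)); last 3 first.
- exact: ind.
- exact: measurable_funepos.
- by move=> z; rewrite funeposE le_max lexx orbT.
rewrite (K _ mC _ (G^\-)); last 3 first.
- exact: ind.
- exact: measurable_funeneg.
- by move=> z; rewrite funenegE le_max lexx orbT.
rewrite [RHS]muleBr //.
  exact: fin_num_measure.
rewrite -eqp -eqn; exact: integrable_add_def.
Qed.
End core.

Section cyl.
Context {d : measure_display} {T : measurableType d} {R : realType}.
Variable (tauseq : nat -> T -> nat).

Definition cylb (N : nat) (B : nat -> pred nat) (t : T) : bool :=
  all (fun m => B m (tauseq m t)) (iota 0 N).

Definition upd (B : nat -> pred nat) (n : nat) (q : pred nat) : nat -> pred nat :=
  fun m => if m == n then q else B m.

Lemma cylbS n B q t : cylb n.+1 (upd B n q) t = cylb n B t && q (tauseq n t).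
Proof.
rewrite /cylb -addn1 iotaD all_cat /= andbT /upd eqxx; congr andb.
apply: eq_in_all => m; rewrite mem_iota => /andP[_ lt].
by rewrite ltn_eqF.
Qed.

Lemma cylb_upd_in n m B q c t : (m < n)%N -> (forall y, q y = B m y && c y) ->
  cylb n (upd B m q) t = cylb n B t && c (tauseq m t).
Proof.
move=> mn hq; case h : (c (tauseq m t)).
  rewrite andbT; apply: eq_all => j; rewrite /upd.
  by case: eqP => [->|] //; rewrite hq h andbT.
rewrite andbF; apply/negbTE/negP => /allP/(_ m).
by rewrite mem_iota /= mn /upd eqxx hq h andbF => /(_ isT).
Qed.

Lemma cylb_predT n t : cylb n (fun _ => xpredT) t.
Proof. by rewrite /cylb all_predT. Qed.

Lemma cyl_set_seq (s : seq nat) (B : nat -> pred nat) :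
  [set t | all (fun m => B m (tauseq m t)) s] =
  \big[setI/setT]_(m <- s) (tauseq m @^-1` [set x | B m x]).
Proof.
elim: s => [|a s IH]; first by rewrite big_nil; apply/seteqP; split.
rewrite big_cons -IH; apply/seteqP; split => t /=.
  by move=> /andP[].
by move=> [-> ->].
Qed.

Lemma cyl_set N B : [set t | cylb N B t] =
  \big[setI/setT]_(m <- iota 0 N) (tauseq m @^-1` [set x | B m x]).
Proof. exact: cyl_set_seq. Qed.

Hypothesis mtau : forall n, measurable_fun setT (tauseq n).

Lemma mpre m (S : set nat) : measurable (tauseq m @^-1` S).
Proof. by rewrite -[X in measurable X]setTI; apply: mtau. Qed.

Lemma mcyl N B : measurable [set t | cylb N B t].
Proof. by rewrite cyl_set; apply: bigsetI_measurable => m _; exact: mpre. Qed.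

End cyl.

Section Fclass.
Context {d : measure_display} {T : measurableType d} {R : realType}.
Variables (tauseq : nat -> T -> nat) (v : nat -> T -> R).
Local Open Scope ring_scope.

Definition Frep n (s : seq (R * (nat -> pred nat) * nat)) (t : T) : R :=
  \sum_(x <- s) x.1.1 * (cylb tauseq n x.1.2 t)%:R * v x.2 t.

Definition Fn n (f : T -> R) := exists s, forall t, f t = Frep n s t.

Lemma Fn_ext {n f g} : (forall t, f t = g t) -> Fn n g -> Fn n f.
Proof. by move=> fg [s hs]; exists s => t; rewrite fg hs. Qed.

Lemma Fn0 n : Fn n (fun _ => 0).
Proof. by exists [::] => t; rewrite /Frep big_nil. Qed.

Lemma FnD {n f g} : Fn n f -> Fn n g -> Fn n (fun t => f t + g t).
Proof.
move=> [s1 h1] [s2 h2]; exists (s1 ++ s2) => t.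
by rewrite h1 h2 /Frep big_cat.
Qed.

Lemma FnZ {n} c {f} : Fn n f -> Fn n (fun t => c * f t).
Proof.
move=> [s h]; exists (map (fun x => (c * x.1.1, x.1.2, x.2)) s) => t.
rewrite h /Frep big_map mulr_sumr; apply: eq_bigr => x _ /=.
by rewrite !mulrA.
Qed.

Lemma Fn_sum n (I : Type) (r : seq I) (Pr : pred I) (F : I -> T -> R) :
  (forall i, Pr i -> Fn n (F i)) -> Fn n (fun t => \sum_(i <- r | Pr i) F i t).
Proof.
move=> hF; elim: r => [|a r IH].
  by apply: (Fn_ext _ (Fn0 n)) => t; rewrite big_nil.
case hP : (Pr a).
  apply: (Fn_ext _ (FnD (hF a hP) IH)) => t.
  by rewrite big_cons hP.
by apply: (Fn_ext _ IH) => t; rewrite big_cons hP.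
Qed.

Lemma Fn_v n k : Fn n (v k).
Proof.
exists [:: (1, (fun _ => xpredT) : nat -> pred nat, k)] => t.
by rewrite /Frep big_seq1 /= cylb_predT mul1r mul1r.
Qed.

Lemma FnS {n f} : Fn n f -> Fn n.+1 f.
Proof.
move=> [s h]; exists (map (fun x => (x.1.1, upd x.1.2 n predT, x.2)) s) => t.
rewrite h /Frep big_map; apply: eq_bigr => x _ /=.
by rewrite cylbS andbT.
Qed.

Lemma Fn_le m n f : (m <= n)%N -> Fn m f -> Fn n f.
Proof.
move=> /subnK <-; elim: (n - m)%N => [|k IH] hf; first by rewrite add0n.
by rewrite addSn; apply: FnS; exact: IH.
Qed.

Lemma Fn_ind {n} m i {f} : (m < n)%N -> Fn n f ->
  Fn n (fun t => (tauseq m t == i)%:R * f t).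
Proof.
move=> mn [s h].
exists (map (fun x => (x.1.1, upd x.1.2 m (fun y => x.1.2 m y && (y == i)), x.2)) s) => t.
rewrite h /Frep big_map mulr_sumr; apply: eq_bigr => x _ /=.
rewrite (@cylb_upd_in _ _ _ _ _ _ _ (fun y => y == i)) //.
by case: (cylb tauseq n x.1.2 t); case: (tauseq m t == i); rewrite /= ?mul1r ?mul0r ?mulr0 ?mulr1 ?mul0r.
Qed.

End Fclass.
Arguments Fn_ext {d T R tauseq v n f g}.
Arguments Fn0 {d T R tauseq v n}.
Arguments FnD {d T R tauseq v n f g}.
Arguments FnZ {d T R tauseq v n} c {f}.
Arguments Fn_sum {d T R tauseq v n I} r Pr F.
Arguments Fn_v {d T R tauseq v n} k.
Arguments FnS {d T R tauseq v n f}.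
Arguments Fn_le {d T R tauseq v} m n {f}.
Arguments Fn_ind {d T R tauseq v n} m i {f}.

Section loop.
Context {d : measure_display} {T : measurableType d} {R : realType}.
Local Open Scope ring_scope.
Variables (np : nat) (Ap : 'M[R]_np) (Bp : 'cV[R]_np) (Cp : 'rV[R]_np)
  (nc : nat) (Ak : 'M[R]_nc) (Bk : 'cV[R]_nc) (Ck : 'rV[R]_nc) (Dk : R)
  (tau : nat) (alpha : nat -> R) (tauseq : nat -> T -> nat)
  (v : nat -> T -> R)
  (xp : nat -> T -> 'cV[R]_np) (xc : nat -> T -> 'cV[R]_nc)
  (y u ud : nat -> T -> R).
Hypotheses (hxp0 : forall t, xp 0%N t = 0) (hxc0 : forall t, xc 0%N t = 0)
  (hxp : forall k t, xp k.+1 t = Ap *m xp k t + (v k t - ud k t) *: Bp)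
  (hy : forall k t, y k t = (Cp *m xp k t) ord0 ord0)
  (hxc : forall k t, xc k.+1 t = Ak *m xc k t + y k t *: Bk)
  (hu : forall k t, u k t = (Ck *m xc k t) ord0 ord0 + Dk * y k t)
  (hud : forall k t, ud k t = channel_out tau alpha tauseq u k t).

Let F := Fn tauseq v.

Lemma Fn_mulmx {k m n} (A : 'M[R]_(m, n)) {X : T -> 'cV[R]_n} :
  (forall j, F k (fun t => X t j ord0)) -> forall i, F k (fun t => (A *m X t) i ord0).
Proof.
move=> hX i; apply: (Fn_ext _ (Fn_sum (index_enum _) xpredT (fun j t => A i j * X t j ord0) _)).
  by move=> t; rewrite mxE.
by move=> j _; exact: (FnZ (A i j) (hX j)).
Qed.

Definition Qk k := (forall i, F k (fun t => xp k t i ord0)) /\ (forall i, F k (fun t => xc k t i ord0)).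

Lemma Fu k : Qk k -> F k (u k).
Proof.
move=> [hp hc]; apply: (Fn_ext _ (FnD (Fn_mulmx Ck hc ord0) (FnZ Dk (Fn_mulmx Cp hp ord0)))).
by move=> t; rewrite hu hy.
Qed.

Lemma Qall k : forall j, (j <= k)%N -> Qk j.
Proof.
elim: k => [|k IH] j.
  rewrite leqn0 => /eqP ->; split => i.
    by apply: (Fn_ext _ Fn0) => t; rewrite hxp0 mxE.
  by apply: (Fn_ext _ Fn0) => t; rewrite hxc0 mxE.
rewrite leq_eqVlt => /orP[/eqP ->|]; last by rewrite ltnS; exact: IH.
have [hp hc] := IH k (leqnn k).
have Fud : F k.+1 (ud k).
  apply: (Fn_ext _ (Fn_sum (index_enum _) (fun i : 'I_tau.+1 => (i <= k)%N)
     (fun i t => alpha i * ((tauseq (k - i) t == i)%:R * u (k - i)%N t)) _)).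
    by move=> t; rewrite hud /channel_out; apply: eq_bigr => i _; rewrite mulrA.
  move=> i ik; apply: FnZ; apply: Fn_ind; first by rewrite ltnS leq_subr.
  apply: (Fn_le (k - i)%N); first by rewrite (leq_trans (leq_subr _ _)).
  by apply: Fu; apply: IH; exact: leq_subr.
have Fy : F k.+1 (y k).
  apply: (Fn_ext _ (Fn_mulmx Cp (fun j => FnS (hp j)) ord0)).
  by move=> t; rewrite hy.
split => i.
  apply: (Fn_ext _ (FnD (Fn_mulmx Ap (fun j => FnS (hp j)) i)
     (FnZ (Bp i ord0) (FnD (Fn_v k) (FnZ (-1) Fud))))).
  by move=> t; rewrite hxp !mxE mulrC mulN1r.
apply: (Fn_ext _ (FnD (Fn_mulmx Ak (fun j => FnS (hc j)) i)
   (FnZ (Bk i ord0) Fy))).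
by move=> t; rewrite hxc !mxE mulrC.
Qed.

Lemma Fu_all k : F k (u k).
Proof. by apply: Fu; apply: (Qall k). Qed.

End loop.

Section prob.
Local Open Scope ereal_scope.
Context {d : measure_display} {T : measurableType d} {R : realType}.
Variables (P : probability T R) (tau : nat) (p : nat -> R)
  (tauseq : nat -> T -> nat) (v : nat -> T -> R).
Hypotheses (mtau : forall n, measurable_fun setT (tauseq n))
  (hp : forall n i, (i <= tau)%N -> P [set t | tauseq n t = i] = (p i)%:E)
  (indtau : indep_family P (fun n => rv_events (tauseq n)))
  (mv : forall k, measurable_fun setT (v k))
  (hE : forall k, ('E_P[v k] = 0)%E)
  (hV : exists M : R, forall k, ('V_P[v k] <= M%:E)%E)
  (indb : indep_families P (fun n => rv_events (tauseq n)) (fun k => rv_events (v k))).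

Lemma sq_int a : P.-integrable setT (fun t => (v a t * v a t)%:E).
Proof.
have [M hM] := hV.
apply/integrableP; split.
  apply/measurable_EFinP; exact: measurable_funM.
under eq_integral => t _ do rewrite abse_EFin ger0_norm ?(mulr_ge0_le0) -?expr2 ?sqr_ge0 //.
apply: (le_lt_trans _ (ltry M)).
apply: le_trans (hM a).
rewrite /variance covariance.unlock hE /= expectation.unlock.
rewrite le_eqVlt; apply/orP; left; apply/eqP; apply: eq_integral => t _.
by change ((v a t ^+ 2)%:E = ((v a t - 0) * (v a t - 0))%:E); rewrite subr0 expr2.
Qed.


Lemma vv_int a b : P.-integrable setT (fun t => (v a t * v b t)%:E).
Proof.
have ig : P.-integrable setT (fun t => (v a t * v a t + v b t * v b t)%:E).
  apply: (eq_integrable _ _ _ _ (integrableD _ (sq_int a) (sq_int b))) => // t _ /=.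

apply: (le_integrable measurableT _ _ ig).
  apply/measurable_EFinP; exact: measurable_funM.
move=> t _; rewrite !abse_EFin lee_fin.
rewrite (@ger0_norm _ (_ + _)); last by rewrite addr_ge0 // -expr2 sqr_ge0.
by rewrite ler_norml; apply/andP; split; nra.
Qed.

Lemma ind_cyl N B a b A1 A2 : measurable A1 -> measurable A2 ->
  P ([set t | A1 (v a t) /\ A2 (v b t)] `&` [set t | cylb tauseq N B t]) =
  P [set t | cylb tauseq N B t] * P [set t | A1 (v a t) /\ A2 (v b t)].
Proof.
move=> mA1 mA2; rewrite cyl_set.
have hA : forall i, i \in iota 0 N -> rv_events (tauseq i) (tauseq i @^-1` [set x | B i x]).
  by move=> i _; exists [set x | B i x].
case: (eqVneq a b) => [<-|ab].
  have := indb (iota 0 N) [:: a] (fun m => tauseq m @^-1` [set x | B m x])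
    (fun _ => v a @^-1` (A1 `&` A2)) hA.
  rewrite big_seq1 => h; rewrite setIC; apply: h.
  move=> j; rewrite inE => /eqP ->; exists (A1 `&` A2) => //; exact: measurableI.
have := indb (iota 0 N) [:: a; b] (fun m => tauseq m @^-1` [set x | B m x])
    (fun j => if j == a then v a @^-1` A1 else v b @^-1` A2) hA.
rewrite big_cons big_seq1 eqxx eq_sym (negbTE ab) => h; rewrite setIC; apply: h.
move=> j; rewrite !inE => /orP[/eqP ->|/eqP ->].
  by rewrite eqxx; exists A1.
by rewrite eq_sym (negbTE ab); exists A2.
Qed.

Lemma prob_cyl n B i : (i <= tau)%N ->
  P [set t | cylb tauseq n.+1 (upd B n (pred1 i)) t] =
  (p i)%:E * P [set t | cylb tauseq n.+1 (upd B n xpredT) t].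
Proof.
move=> hi.
have H q : P [set t | cylb tauseq n.+1 (upd B n q) t] =
    (\prod_(m <- iota 0 n) P (tauseq m @^-1` [set x | B m x])) * P (tauseq n @^-1` [set x | q x]).
  rewrite cyl_set indtau ?iota_uniq //; last by move=> j _; exists [set x | upd B n q j x].
  rewrite -addn1 iotaD big_cat /= big_seq1 /upd eqxx; congr (_ * _).
  apply: eq_big_seq => m; rewrite mem_iota => /andP[_ lt].
  by rewrite ltn_eqF.

rewrite !H.
have -> : tauseq n @^-1` [set x | pred1 i x] = [set t | tauseq n t = i].
  by apply/seteqP; split => t /= /eqP.
have -> : tauseq n @^-1` [set x | xpredT x] = setT by apply/seteqP; split.
by rewrite hp // probability_setT mule1 muleC.
Qed.

Definition Zp (f : T -> R) := P.-integrable setT (fun t => (f t)%:E) /\ \int[P]_t (f t)%:E = 0.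

Lemma Zp_ext {f g} : (forall t, f t = g t) -> Zp g -> Zp f.
Proof. by move=> fg; have -> : f = g by apply/funext. Qed.

Lemma Zp0 : Zp (fun _ => 0%R).
Proof. by split; [exact: integrable0 | exact: integral0]. Qed.

Lemma ZpD {f g} : Zp f -> Zp g -> Zp (fun t => f t + g t)%R.
Proof.
move=> [if0 ef] [ig eg]; split.
  by apply: (eq_integrable _ _ _ _ (integrableD _ if0 ig)) => // t _ /=; rewrite ?EFinD.
under eq_integral do rewrite EFinD.
by rewrite integralD // ef eg adde0.
Qed.

Lemma ZpZ c {f} : Zp f -> Zp (fun t => c * f t)%R.
Proof.
move=> [if0 ef]; split.
  by apply: (eq_integrable _ _ _ _ (integrableZl _ c if0)) => // t _ /=; rewrite ?EFinM.
under eq_integral do rewrite EFinM.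
by rewrite integralZl // ef mule0.
Qed.

Lemma Zp_sum (I : Type) (r : seq I) (Pr : pred I) (F : I -> T -> R) :
  (forall i, Pr i -> Zp (F i)) -> Zp (fun t => \sum_(i <- r | Pr i) F i t)%R.
Proof.
move=> hF; elim: r => [|a r IH].
  by apply: (Zp_ext _ Zp0) => t; rewrite big_nil.
case hP : (Pr a).
  by apply: (Zp_ext _ (ZpD (hF a hP) IH)) => t; rewrite big_cons hP.
by apply: (Zp_ext _ IH) => t; rewrite big_cons hP.
Qed.


Lemma atom n B i a b : (i <= tau)%N ->
  Zp (fun t => (cylb tauseq n.+1 (upd B n (pred1 i)) t)%:R * v a t * v b t
        - p i * ((cylb tauseq n.+1 (upd B n xpredT) t)%:R * v a t * v b t))%R.
Proof.
move=> hi.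
have [i1 e1] := @K1 _ _ _ P (v a) (v b) (mv a) (mv b)
  (cylb tauseq n.+1 (upd B n (pred1 i))) (mcyl tauseq mtau _ _) (ind_cyl _ _ a b) (vv_int a b).
have [i2 e2] := @K1 _ _ _ P (v a) (v b) (mv a) (mv b)
  (cylb tauseq n.+1 (upd B n xpredT)) (mcyl tauseq mtau _ _) (ind_cyl _ _ a b) (vv_int a b).
have i3 := integrableZl measurableT (p i) i2.
split.
  by apply: (eq_integrable _ _ _ _ (integrableB _ i1 i3)) => // t _ /=; rewrite ?EFinB ?EFinM.
under eq_integral do rewrite EFinB EFinM.
rewrite (integralB _ i1 i3) // integralZl //.
move: e1 e2; rewrite !unlock => -> ->.
rewrite prob_cyl // muleA subee //.
rewrite !fin_numM // ?fin_num_measure //.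
  exact: mcyl.
exact: integrable_fin_num (vv_int a b).
Qed.


Lemma main_Zp (alpha : nat -> R) (u : nat -> T -> R) (hF : forall n, Fn tauseq v n (u n)) k1 k2 :
  Zp (fun t => v k1 t * dsig tau alpha p tauseq u k2 t)%R.
Proof.
apply: (Zp_ext _ (Zp_sum _ (index_enum 'I_tau.+1) (fun i : 'I_tau.+1 => (i <= k2)%N)
   (fun i t => v k1 t * (omega tau alpha p tauseq k2 (k2 - i)%N t * u (k2 - i)%N t))%R _)).
  by move=> t; rewrite /dsig mulr_sumr.
move=> i ik /=.
have hi : (i <= tau)%N by rewrite -ltnS.
set n := (k2 - i)%N.
have [s hs] := hF n.
apply: (Zp_ext _ (Zp_sum _ s xpredT (fun x t => alpha i * x.1.1 *
   ((cylb tauseq n.+1 (upd x.1.2 n (pred1 (nat_of_ord i))) t)%:R * v k1 t * v x.2 t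
     - p i * ((cylb tauseq n.+1 (upd x.1.2 n xpredT) t)%:R * v k1 t * v x.2 t)))%R _));
  last first.
  by move=> x _; apply: ZpZ; apply: atom.
move=> t.
have -> : omega tau alpha p tauseq k2 n t = (alpha i * ((tauseq n t == i)%:R - p i))%R.
  rewrite /omega /n leq_subr /= (_ : (k2 <= k2 - i + tau)%N = true); last by lia.
  by rewrite subKn.
rewrite hs /Frep !mulr_sumr; apply: eq_bigr => x _.
rewrite !cylbS andbT /=.
by case: (cylb tauseq n x.1.2 t); case: (tauseq n t == i) => /=; ring.
Qed.

End prob.

Theorem lemma6 (R : realType) (d : measure_display) (T : measurableType d)
  (P : probability T R)
  (* plant P (strictly proper: state space with zero feedthrough) *)
  (np : nat) (Ap : 'M[R]_np) (Bp : 'cV[R]_np) (Cp : 'rV[R]_np)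
  (* controller K (proper: state space with feedthrough Dk) *)
  (nc : nat) (Ak : 'M[R]_nc) (Bk : 'cV[R]_nc) (Ck : 'rV[R]_nc) (Dk : R)
  (* channel *)
  (tau : nat) (p alpha : nat -> R) (tauseq : nat -> T -> nat)
  (* exogenous input and closed-loop signals *)
  (v : nat -> T -> R)
  (xp : nat -> T -> 'cV[R]_np) (xc : nat -> T -> 'cV[R]_nc)
  (y u ud : nat -> T -> R) :
  (* {tau_n}: i.i.d. with values in {0,...,tau}, Pr{tau_n = i} = p_i *)
  (forall n, measurable_fun setT (tauseq n)) ->
  (forall n t, (tauseq n t <= tau)%N) ->
  (forall n i, (i <= tau)%N -> P [set t | tauseq n t = i] = (p i)%:E) ->
  \sum_(i < tau.+1) p i = 1 ->
  indep_family P (fun n => rv_events (tauseq n)) ->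
  (* {v(k)}: zero-mean white noise with bounded variances *)
  (forall k, measurable_fun setT (v k)) ->
  indep_family P (fun k => rv_events (v k)) ->
  (forall k, ('E_P[v k] = 0)%E) ->
  (exists M : R, forall k, ('V_P[v k] <= M%:E)%E) ->
  (* {tau_n} independent of {v(k)} *)
  indep_families P (fun n => rv_events (tauseq n)) (fun k => rv_events (v k)) ->
  (* closed loop, at rest at k = 0 *)
  (forall t, xp 0%N t = 0) ->
  (forall t, xc 0%N t = 0) ->
  (forall k t, xp k.+1 t = Ap *m xp k t + (v k t - ud k t) *: Bp) ->
  (forall k t, y k t = (Cp *m xp k t) ord0 ord0) ->
  (forall k t, xc k.+1 t = Ak *m xc k t + y k t *: Bk) ->
  (forall k t, u k t = (Ck *m xc k t) ord0 ord0 + Dk * y k t) ->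
  (forall k t, ud k t = channel_out tau alpha tauseq u k t) ->
  forall k1 k2 : nat,
    P.-integrable setT
      (fun t => (v k1 t * dsig tau alpha p tauseq u k2 t)%:E) /\
    ('E_P[fun t => (v k1 t * dsig tau alpha p tauseq u k2 t)%R] = 0)%E.
Proof.
move=> mtau htle hp hsum indtau mv indv hE hV indb hxp0 hxc0 hxp hy hxc hu hud k1 k2.
have hF : forall n, Fn tauseq v n (u n).
  by move=> n; eapply Fu_all; [exact: hxp0|exact: hxc0|exact: hxp|exact: hy|exact: hxc|exact: hu|exact: hud].
have Z : Zp P (fun t => v k1 t * dsig tau alpha p tauseq u k2 t).
  by eapply main_Zp; eassumption.
case: Z => Zi Ze; split => //.
by rewrite unlock; exact: Ze.
Qed.
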